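(* Let $\hbar\in\mathbb C\setminus\{0\}$, $p=2\hbar$, $0\le\ell\le n$. For generic $z=(z_1,\dots,z_n)$, the functions $W_M(\cdot\,;z)$, $M\subset\{1,\dots,n\}$, $\#M=\ell$, form a basis of $\overline{\mathcal F}_q^{\wedge\ell}(z)$.
   Context: A point $z$ is generic if $z_k-z_m+\hbar\notin p\mathbb Z$ for $k\ne m$ (equivalently, since $p=2\hbar$, $\prod_{k<m}(e^{2\pi iz_k/p}+e^{2\pi iz_m/p})\ne0$). For $f(t_1,\dots,t_\ell)$, $\mathrm{Asym}\,f=\sum_{\sigma\in S_\ell}\mathrm{sgn}(\sigma)f(t_{\sigma_1},\dots,t_{\sigma_\ell})$. With $E(t)=e^{2\pi it/p}$ and $M=\{m_1<\dots<m_\ell\}$: $G_M(t)=\prod_{a=1}^\ell\Big(\frac{1}{E(t_a-z_{m_a})-1}\prod_{1\le j<m_a}\frac{E(t_a-z_j)+1}{E(t_a-z_j)-1}\Big)$, $W_M=\mathrm{Asym}\,G_M$. $\overline{\mathcal F}_q^{\wedge\ell}(z)$ is the space of functions $F(t_1,\dots,t_\ell)$ such that $F\prod_{m=1}^n\prod_{a=1}^\ell(1-E(t_a-z_m))$ is an antisymmetric polynomial in $E(t_1),\dots,E(t_\ell)$ of degree less than $n$ in each variable. *)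

(* Defs.v *)
From HB Require Import structures.
From mathcomp Require Import all_boot all_order all_algebra all_fingroup.
From mathcomp Require Import complex.
From mathcomp Require Import reals sequences exp trigo.
Set Implicit Arguments. Unset Strict Implicit. Unset Printing Implicit Defensive.
Import Order.TTheory GRing.Theory Num.Theory.
Local Open Scope ring_scope.
Local Open Scope complex_scope.

Section Defs.
Variable R : realType.
Local Notation C := R[i].

Definition expC (w : C) : C :=
  let: a +i* b := w in (expR a)%:C * (cos b +i* sin b).

Definition Efun (p t : C) : C := expC ((2 * pi)%:C * 'i * t / p).

Definition generic_pt (n : nat) (hbar p : C) (z : 'I_n -> C) : Prop :=
  forall k m : 'I_n, k != m -> forall j : int, z k - z m + hbar != j%:~R * p.

Definition Asym (l : nat) (f : ('I_l -> C) -> C) : ('I_l -> C) -> C :=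
  fun t => \sum_(s : 'S_l) (-1) ^+ odd_perm s * f (fun a => t (s a)).

(* z_k for a natural index k (0-based); only used with k < n *)
Definition zat (n : nat) (z : 'I_n -> C) (k : nat) : C :=
  match (insub k : option 'I_n) with Some j => z j | None => 0 end.

Definition melt (n : nat) (M : {set 'I_n}) (a : nat) : nat :=
  nth 0%N (sort leq [seq val i | i <- enum M]) a.

(* G_M(t) (indices 0-based: the condition 1 <= j < m_a becomes j < m_a) *)
Definition GM (n l : nat) (p : C) (z : 'I_n -> C) (M : {set 'I_n})
    (t : 'I_l -> C) : C :=
  \prod_(a < l)
    ((Efun p (t a - zat z (melt M a)) - 1)^-1 *
     \prod_(j < n | (val j < melt M a)%N)
        ((Efun p (t a - z j) + 1) / (Efun p (t a - z j) - 1))).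

Definition WM (n l : nat) (p : C) (z : 'I_n -> C) (M : {set 'I_n}) :
  ('I_l -> C) -> C := Asym (GM p z M).

Definition polyev (n l : nat) (c : {ffun 'I_l -> 'I_n} -> C) (x : 'I_l -> C) : C :=
  \sum_(e : {ffun 'I_l -> 'I_n}) c e * \prod_(a < l) x a ^+ val (e a).

Definition antisym_fun (l : nat) (P : ('I_l -> C) -> C) : Prop :=
  forall (s : 'S_l) (x : 'I_l -> C),
    P (fun a => x (s a)) = (-1) ^+ odd_perm s * P x.

Definition regular_pt (n l : nat) (p : C) (z : 'I_n -> C) (t : 'I_l -> C) : Prop :=
  forall (a : 'I_l) (m : 'I_n), Efun p (t a - z m) != 1.

(* F \in \bar F_q^{\wedge l}(z): F * prod_{m,a} (1 - E(t_a - z_m)) is an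
   antisymmetric polynomial in E(t_1),...,E(t_l) of degree < n in each
   variable (identity of meromorphic functions, i.e. off the poles). *)
Definition Fspace (n l : nat) (p : C) (z : 'I_n -> C) (F : ('I_l -> C) -> C) : Prop :=
  exists c : {ffun 'I_l -> 'I_n} -> C,
    antisym_fun (polyev c) /\
    forall t, regular_pt p z t ->
      F t * \prod_(m < n) \prod_(a < l) (1 - Efun p (t a - z m)) =
      polyev c (fun a => Efun p (t a)).

End Defs.

(* Main.v *)
Require Import Defs.
From HB Require Import structures.
From mathcomp Require Import all_boot all_order all_algebra all_fingroup.
From mathcomp Require Import complex.
From mathcomp Require Import reals sequences exp trigo.
From mathcomp Require Import ring lra zify.
Set Implicit Arguments. Unset Strict Implicit. Unset Printing Implicit Defensive.
Import Order.TTheory GRing.Theory Num.Theory.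
Local Open Scope ring_scope.

Section Exp.
Local Open Scope complex_scope.
Variable R : realType.
Local Notation C := R[i].

Lemma expC0 : expC (0 : C) = 1.
Proof. by rewrite /expC /= expR0 cos0 sin0 mul1r. Qed.

Lemma expCD (u v : C) : expC (u + v) = expC u * expC v.
Proof.
case: u => a b; case: v => c d; rewrite /expC /=.
rewrite expRD cosD sinD.
apply/eqP; rewrite eq_complex /=; apply/andP; split; apply/eqP; ring.
Qed.

Lemma expC_neq0 (u : C) : expC u != 0.
Proof.
apply/negP => /eqP H.
have := expCD u (- u); rewrite subrr expC0 H mul0r => /eqP.
by rewrite oner_eq0.
Qed.

Lemma cos_perz (x : R) (k : int) : cos (x + (pi *+ 2) *~ k) = cos x.
Proof.
case: k => n.
  have := (periodicn (@cosD2pi R) n x); rewrite -pmulrn. exact.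
rewrite NegzE mulrNz -pmulrn.
by rewrite -[in RHS](subrK ((pi *+ 2) *+ n.+1) x) (periodicn (@cosD2pi R)).
Qed.

Lemma cos_eq1 (b : R) : cos b = 1 -> exists k : int, b = (pi *+ 2) *~ k.
Proof.
move=> Hb.
have T0 : 0 < pi *+ 2 :> R by rewrite pmulrn_rgt0 // pi_gt0.
set T := pi *+ 2 in T0 *.
set k := Num.floor (b / T).
have /andP[h1 h2] := floor_itv (b / T).
rewrite -/k in h1 h2.
set r := b - T *~ k.
have Hr : cos r = 1 by rewrite -Hb -(cos_perz r k) /r subrK.
have r0 : 0 <= r.
  by rewrite /r subr_ge0 -mulrzr -ler_pdivlMl // mulrC.
have rT : r < T.
  rewrite /r ltrBlDl -mulrzr.
  by move: h2; rewrite ltr_pdivrMr // intrD mulrDl mul1r mulrC.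
exists k.
suff H : r = 0 by move/eqP: H; rewrite /r subr_eq0 => /eqP.
have [rpi|pir] := lerP r pi.
  apply: cos_inj => //; rewrite ?in_itv /= ?r0 ?rpi ?lexx ?pi_ge0 //.
  by rewrite Hr cos0.
exfalso.
have s0 : 0 < T - r by rewrite subr_gt0.
have spi : T - r < pi by rewrite /T mulr2n ltrBlDr ltrD2l.
have : T - r = 0.
  apply: cos_inj; rewrite ?in_itv /= ?(ltW s0) ?(ltW spi) ?lexx ?pi_ge0 //.
  by rewrite /T addrC cosD2pi cosN Hr cos0.
by move=> h; move: s0; rewrite h ltxx.
Qed.

Lemma expC_eq1 (u : C) : expC u = 1 -> exists k : int, u = ((pi *+ 2) *~ k)%:C * 'i%R.
Proof.
case: u => a b; rewrite /expC => /eqP; rewrite eq_complex /= => /andP[/eqP h1 /eqP h2].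
rewrite !mul0r subr0 addr0 in h1 h2.
have ea : expR a != 0 by rewrite gt_eqF // expR_gt0.
have sb : sin b = 0 by move/eqP: h2; rewrite mulf_eq0 (negbTE ea) /= => /eqP.
have cb : cos b = 1.
  have := sin0cos1 sb; case: (ger0P (cos b)) => // cn.
  move=> H; have : cos b = -1 by rewrite -H opprK.
  by move=> H2; move: h1; rewrite H2 mulrN1 => H3; have := expR_gt0 a; rewrite -oppr_lt0 H3 ltr10.
have a0 : a = 0 by apply: expR_inj; rewrite expR0 -h1 cb mulr1.
have [k hk] := @cos_eq1 b cb.
exists k; apply/eqP; rewrite eq_complex /= a0 hk; apply/andP; split; apply/eqP; ring.
Qed.

Lemma Efun_add (p t s : C) : Efun p (t + s) = Efun p t * Efun p s.
Proof. by rewrite /Efun -expCD !mulrDr mulrDl. Qed.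

Lemma Efun_neq0 (p t : C) : Efun p t != 0.
Proof. exact: expC_neq0. Qed.

Lemma Efun0 (p : C) : Efun p 0 = 1.
Proof. by rewrite /Efun mulr0 mul0r expC0. Qed.

Lemma EfunN (p t : C) : Efun p (- t) = (Efun p t)^-1.
Proof.
apply: (mulfI (Efun_neq0 p t)).
by rewrite -Efun_add subrr Efun0 mulfV ?Efun_neq0.
Qed.

Lemma iE : 'i%R = 'i%C :> C. Proof. by []. Qed.

Lemma ci_neq0 : ((2 * pi)%:C * 'i%R : C) != 0.
Proof.
rewrite iE mulf_eq0 negb_or; apply/andP; split.
  by rewrite eq_complex /= eqxx andbT mulf_eq0 negb_or pnatr_eq0 /= gt_eqF // pi_gt0.
by rewrite eq_complex /= oner_eq0 andbF.
Qed.

Lemma Efun_hbar (hbar : C) : hbar != 0 -> Efun (2 * hbar) hbar = -1.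
Proof.
move=> h0; rewrite /Efun.
have -> : (2 * pi)%:C * 'i%R * hbar / (2 * hbar) = 0 +i* (pi : R).
  have -> : (2 * pi)%:C = (2 : C) * pi%:C by rewrite rmorphM /= rmorph_nat.
  have -> : 0 +i* (pi : R) = pi%:C * 'i%R.
    rewrite iE.
    by apply/eqP; rewrite eq_complex /=; apply/andP; split; apply/eqP; ring.
  by field; rewrite h0.
rewrite /expC expR0 cospi sinpi mul1r.
by apply/eqP; rewrite eq_complex /= oppr0 !eqxx.
Qed.

Lemma Efun_eq1 (p x : C) : p != 0 -> Efun p x = 1 -> exists k : int, x = k%:~R * p.
Proof.
move=> p0 /expC_eq1 [k hk]; exists k.
have c0 := ci_neq0.
have e : ((pi *+ 2) *~ k)%:C = (2 * pi)%:C * k%:~R :> C.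
  by rewrite -mulrzr rmorphM /= rmorph_int mulr_natl.
rewrite e in hk.
have : (2 * pi)%:C * 'i%R * x = (2 * pi)%:C * 'i%R * (k%:~R * p).
  by rewrite -[LHS](divfK p0) hk; rewrite iE; ring.
by move/mulfI; apply.
Qed.

Lemma w_sum_neq0 (hbar : C) n (z : 'I_n -> C) : hbar != 0 ->
  generic_pt hbar (2 * hbar) z -> forall j k, j != k ->
  Efun (2 * hbar) (- z j) + Efun (2 * hbar) (- z k) != 0.
Proof.
move=> h0 gen j k jk; apply/negP => /eqP H.
have p0 : 2 * hbar != 0 by rewrite mulf_neq0 // pnatr_eq0.
have : Efun (2 * hbar) (z j - z k + hbar) = 1.
  have HK : Efun (2 * hbar) (- z k) = - Efun (2 * hbar) (- z j).
    by apply/eqP; rewrite -addr_eq0 addrC H.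
  rewrite !Efun_add Efun_hbar // HK EfunN !mulrN mulr1 opprK mulfV //; exact: Efun_neq0.
move/(@Efun_eq1 _ _ p0) => [m hm].
by move: (gen j k jk m); rewrite hm eqxx.
Qed.
End Exp.

Section Poly.
Variable R : realType.
Local Notation C := R[i].

Definition qf n (w : 'I_n -> C) (m j : 'I_n) : {poly C} :=
  if (j < m)%N then - (w j *: 'X + 1) else 1 - w j *: 'X.
Definition qp n (w : 'I_n -> C) (m : 'I_n) : {poly C} :=
  - \prod_(j | j != m) qf w m j.

Lemma size_prod_le2 (I : finType) (P : pred I) (F : I -> {poly C}) :
  (forall i, (size (F i) <= 2)%N) -> (size (\prod_(i | P i) F i)%R <= #|P|.+1)%N.
Proof.
move=> H; rewrite -sum1_card; elim/big_rec2: _ => [|i d p _ IH].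
  by rewrite size_poly1.
apply: leq_trans (size_polyMleq _ _) _; have := H i; lia.
Qed.

Lemma size_qf n w (m j : 'I_n) : (size (qf w m j) <= 2)%N.
Proof.
rewrite /qf; case: ifP => _.
  rewrite size_polyN; apply: leq_trans (size_polyD _ _) _; rewrite geq_max size_poly1.
  by rewrite (leq_trans (size_scale_leq _ _)) ?size_polyX.
apply: leq_trans (size_polyD _ _) _; rewrite geq_max size_poly1 size_polyN.
by rewrite (leq_trans (size_scale_leq _ _)) ?size_polyX.
Qed.

Lemma size_qp n w (m : 'I_n) : (size (qp w m) <= n)%N.
Proof.
rewrite size_polyN.
apply: leq_trans (size_prod_le2 _ (size_qf w m)) _.
rewrite cardC1 card_ord; case: n w m => [? []|n] //.
Qed.

Lemma qp_lift n (w : 'I_n.+1 -> C) (m : 'I_n) :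
  qp w (lift ord0 m) = - ((w ord0 *: 'X + 1) * qp (fun j => w (lift ord0 j)) m).
Proof.
rewrite /qp mulrN opprK big_mkcond big_ord_recl /= /qf /= mulNr opprK; congr (_ * _).
rewrite [RHS]big_mkcond; apply: eq_bigr => j _.
by rewrite (inj_eq lift_inj) /bump /= !add1n ltnS.
Qed.

Lemma qp_free n (w : 'I_n -> C) : (forall j, w j != 0) ->
  (forall j k, j != k -> w j + w k != 0) ->
  forall mu : 'I_n -> C, \sum_m mu m *: qp w m = 0 -> forall m, mu m = 0.
Proof.
elim: n w => [w _ _ mu _ []//|n IH w w0 wjk mu Hs].
set x0 := - (w ord0)^-1.
have hx0 : w ord0 * x0 + 1 = 0 by rewrite /x0 mulrN mulfV ?w0 // addrC subrr.
have mu0 : mu ord0 = 0.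
  have := congr1 (fun p => p.[x0]) Hs; rewrite horner_sum hornerC.
  rewrite big_ord_recl big1 ?addr0; last first.
    move=> j _; rewrite hornerZ qp_lift hornerN hornerM hornerD hornerZ hornerX hornerC hx0.
    by rewrite mul0r oppr0 mulr0.
  rewrite hornerZ /qp hornerN horner_prod mulrN => /eqP; rewrite oppr_eq0 mulf_eq0 => /orP[/eqP //|].
  rewrite prodf_seq_eq0 => /hasP [j _ /andP [j0]].
  rewrite /qf ltn0 hornerD hornerN hornerZ hornerX hornerC /x0 => /eqP H.
  have e : w j + w ord0 = w ord0 * (1 - w j * - (w ord0)^-1).
    by field; apply: w0.
  by move: (wjk _ _ j0); rewrite e H mulr0 eqxx.
have Hs' : (w ord0 *: 'X + 1) * \sum_j mu (lift ord0 j) *: qp (fun j => w (lift ord0 j)) j = 0.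
  move: Hs; rewrite big_ord_recl mu0 scale0r add0r => Hs.
  rewrite mulr_sumr -[RHS]oppr0 -[in RHS]Hs -sumrN.
  by apply: eq_bigr => j _; rewrite qp_lift -!mul_polyC; ring.
have nz : w ord0 *: 'X + 1 != 0 :> {poly C}.
  apply/negP => /eqP /(congr1 (fun p => p.[0])).
  by rewrite hornerD hornerZ hornerX hornerC mulr0 add0r horner0 => /eqP; rewrite oner_eq0.
move: Hs' => /eqP; rewrite mulf_eq0 (negbTE nz) /= => /eqP Hs'.
have IH' := IH _ (fun j => w0 _)
  (fun j k jk => wjk (lift ord0 j) (lift ord0 k) ltac:(by rewrite (inj_eq (@lift_inj _ ord0)))) _ Hs'.
move=> m; case: (unliftP ord0 m) => [j ->|->] //.
Qed.

Section Vmat.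
Variables (n : nat) (w s : 'I_n -> C).
Hypothesis w0 : forall j, w j != 0.
Hypothesis wjk : forall j k, j != k -> w j + w k != 0.
Hypothesis s_inj : injective s.

Definition Vm : 'M[C]_n := \matrix_(m, i) (qp w m).[s i].
Definition Vi : 'M[C]_n := invmx Vm.
Definition phi (f : C -> C) (m : 'I_n) : C := \sum_i Vi i m * f (s i).

Lemma size_sum_qp (mu : 'I_n -> C) : (size (\sum_m mu m *: qp w m)%R <= n)%N.
Proof.
apply: (big_ind (fun p : {poly C} => size p <= n)%N) => //.
- by rewrite size_poly0.
- by move=> p q hp hq; apply: leq_trans (size_polyD _ _) _; rewrite geq_max hp hq.
- by move=> m _; apply: leq_trans (size_scale_leq _ _) _; apply: size_qp.
Qed.

Lemma roots_eq0 (f : {poly C}) : (size f <= n)%N -> (forall i, f.[s i] = 0) -> f = 0.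
Proof.
move=> sf hr; apply: (@roots_geq_poly_eq0 _ f [seq s i | i <- enum 'I_n]).
- by apply/allP => x /mapP [i _ ->]; apply/rootP.
- by rewrite map_inj_uniq ?enum_uniq.
- by rewrite size_map size_enum_ord.
Qed.

Lemma Vm_unit : Vm \in unitmx.
Proof.
rewrite unitmxE unitfE; apply/negP => /det0P [v v0 hv].
pose f := \sum_m v 0 m *: qp w m.
have f0 : f = 0.
  apply: roots_eq0; first exact: size_sum_qp.
  move=> i; have := congr1 (fun M : 'M[C]_(1,n) => M 0 i) hv; rewrite !mxE => <-.
  rewrite /f horner_sum; apply: eq_bigr => m _; by rewrite hornerZ mxE.
have := qp_free w0 wjk f0 => hz.
by move/negP: v0; apply; apply/eqP/rowP => m; rewrite mxE hz.
Qed.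

Lemma phi_qp (k m : 'I_n) : phi (fun y => (qp w k).[y]) m = (k == m)%:R.
Proof.
have := mulmxV Vm_unit; move/(congr1 (fun M : 'M[C]_n => M k m)); rewrite !mxE => <-.
by apply: eq_bigr => i _; rewrite mxE mulrC.
Qed.

Lemma expand_poly (f : {poly C}) y : (size f <= n)%N ->
  f.[y] = \sum_m phi (horner f) m * (qp w m).[y].
Proof.
move=> sf.
suff : f - \sum_m phi (horner f) m *: qp w m = 0.
  move/eqP; rewrite subr_eq0 => /eqP E.
  by rewrite {1}E horner_sum; apply: eq_bigr => m _; rewrite hornerZ.
apply: roots_eq0.
  by apply: leq_trans (size_polyD _ _) _; rewrite geq_max size_polyN sf size_sum_qp.
move=> j; rewrite hornerD hornerN horner_sum; apply/eqP; rewrite subr_eq0; apply/eqP.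
symmetry; transitivity (\sum_i f.[s i] * (Vi *m Vm) i j).
  under eq_bigr do rewrite hornerZ /phi mulr_suml.
  rewrite exchange_big /=; apply: eq_bigr => i _; rewrite mxE mulr_sumr.
  by apply: eq_bigr => m _; rewrite /Vm mxE; ring.
rewrite /Vi mulVmx ?Vm_unit // (bigD1 j) //= mxE eqxx mulr1 big1 ?addr0 //.
by move=> i /negbTE ij; rewrite mxE ij mulr0.
Qed.


Lemma detT l (A : 'M[C]_l) : \det A = \sum_(sg : 'S_l) (-1) ^+ sg * \prod_c A (sg c) c.
Proof. by rewrite -det_tr; apply: eq_bigr => sg _; congr (_ * _); apply: eq_bigr => c _; rewrite mxE. Qed.

Variable l : nat.
Definition qv (m : 'I_n) (y : C) := (qp w m).[y].
Definition Qm (k : 'I_l -> 'I_n) (y : 'I_l -> C) : 'M[C]_l := \matrix_(a, b) qv (k a) (y b).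
Definition Dk k y := \det (Qm k y).
Definition Phi (K : 'I_l -> 'I_n) (F : ('I_l -> C) -> C) :=
  \sum_(i : {ffun 'I_l -> 'I_n}) (\prod_c Vi (i c) (K c)) * F (fun c => s (i c)).

Lemma Phi_D k K : Phi K (Dk k) = \det (\matrix_(a, c) ((k a == K c)%:R : C)).
Proof.
rewrite /Phi detT.
under eq_bigr do rewrite /Dk detT mulr_sumr.
rewrite exchange_big /=; apply: eq_bigr => sg _.
under eq_bigr do rewrite mulrCA -big_split /=.
rewrite -mulr_sumr; congr (_ * _).
transitivity (\sum_(i : {ffun 'I_l -> 'I_n}) \prod_c (Vi (i c) (K c) * qv (k (sg c)) (s (i c)))).
  by apply: eq_bigr => i _; apply: eq_bigr => c _; rewrite /Qm mxE.
rewrite -(bigA_distr_bigA (fun c j => Vi j (K c) * qv (k (sg c)) (s j))).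
apply: eq_bigr => c _; rewrite mxE -(phi_qp (k (sg c)) (K c)) /phi.
by apply: eq_bigr => j _; rewrite mulrC.
Qed.

Hypothesis Hln : (l <= n)%N.
Definition mo (M : {set 'I_n}) (a : 'I_l) : 'I_n := nth (widen_ord Hln a) (enum M) a.

Section MoProps.
Variable M : {set 'I_n}.
Hypothesis HM : #|M| = l.

Lemma mo_nth x0 a : mo M a = nth x0 (enum M) a.
Proof. by rewrite /mo (set_nth_default x0) // -cardE HM ltn_ord. Qed.

Lemma mo_in a : mo M a \in M.
Proof. by rewrite /mo -mem_enum mem_nth // -cardE HM ltn_ord. Qed.

Lemma mo_inj : injective (mo M).
Proof.
move=> a b; rewrite (mo_nth (widen_ord Hln a) a) (mo_nth (widen_ord Hln a) b) => /eqP.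
rewrite nth_uniq ?enum_uniq // -?cardE ?HM ?ltn_ord // => /eqP; exact: val_inj.
Qed.

Lemma mo_surj x : x \in M -> exists a, mo M a = x.
Proof.
move=> xM; have hi : (index x (enum M) < l)%N by rewrite -HM cardE index_mem mem_enum.
by exists (Ordinal hi); rewrite (mo_nth x) nth_index // mem_enum.
Qed.
End MoProps.

Lemma det_delta (M N : {set 'I_n}) : #|M| = l -> #|N| = l ->
  \det (\matrix_(a, c) ((mo M a == mo N c)%:R : C)) = (M == N)%:R.
Proof.
move=> HM HN; have [<-|MN] := eqVneq M N.
  have -> : \matrix_(a, c) ((mo M a == mo M c)%:R : C) = 1%:M.
    by apply/matrixP => a c; rewrite !mxE (inj_eq (mo_inj HM)).
  by rewrite det1.
have : ~~ (M \subset N).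
  by apply/negP => sMN; move/negP: MN; apply; rewrite eqEcard sMN HM HN leqnn.
case/subsetPn => x xM xN; have [a ha] := mo_surj HM xM.
rewrite /determinant big1 // => sg _; rewrite (bigD1 a) //= mxE.
have -> : (mo M a == mo N (sg a)) = false.
  by apply/negbTE; apply: contraNneq xN => e; rewrite -ha e mo_in.
by rewrite mul0r mulr0.
Qed.

Lemma indep_alg (lam : {set 'I_n} -> C) :
  (forall i : {ffun 'I_l -> 'I_n},
     \sum_(M : {set 'I_n} | #|M| == l) lam M * Dk (mo M) (fun c => s (i c)) = 0) ->
  forall N : {set 'I_n}, #|N| = l -> lam N = 0.
Proof.
move=> H N HN.
have E : Phi (mo N) (fun y => \sum_(M : {set 'I_n} | #|M| == l) lam M * Dk (mo M) y)
   = \sum_(M : {set 'I_n} | #|M| == l) lam M * Phi (mo N) (Dk (mo M)).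
  rewrite /Phi; under eq_bigr do rewrite mulr_sumr.
  rewrite exchange_big /=; apply: eq_bigr => M _; rewrite mulr_sumr.
  by apply: eq_bigr => i _; rewrite mulrCA.
have Z : Phi (mo N) (fun y => \sum_(M : {set 'I_n} | #|M| == l) lam M * Dk (mo M) y) = 0.
  by rewrite /Phi big1 // => i _; rewrite H mulr0.
rewrite Z in E; symmetry; rewrite E.
rewrite (bigD1 N) ?HN //= big1.
  by rewrite Phi_D det_delta // eqxx mulr1 addr0.
move=> M /andP [/eqP HM MN]; rewrite Phi_D det_delta //.
by rewrite (negbTE MN) mulr0.
Qed.

Definition cD (k : 'I_l -> 'I_n) (e : {ffun 'I_l -> 'I_n}) : C :=
  \sum_(sg : 'S_l) (-1) ^+ sg * \prod_c (qp w (k (sg c)))`_(e c).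

Lemma Dk_polyev k y : Dk k y = polyev (cD k) y.
Proof.
rewrite /Dk detT /polyev.
under [RHS]eq_bigr do rewrite /cD mulr_suml.
rewrite [RHS]exchange_big /=; apply: eq_bigr => sg _.
transitivity ((-1) ^+ sg * \prod_c \sum_(j < n) (qp w (k (sg c)))`_j * y c ^+ j).
  congr (_ * _); apply: eq_bigr => c _; rewrite /Qm mxE /qv.
  by rewrite (horner_coef_wide _ (size_qp _ _)).
rewrite bigA_distr_bigA mulr_sumr; apply: eq_bigr => e _.
by rewrite -mulrA big_split.
Qed.

Lemma Dk_perm k y (sg : 'S_l) : Dk k (fun b => y (sg b)) = (-1) ^+ sg * Dk k y.
Proof.
rewrite /Dk; have -> : Qm k (fun b => y (sg b)) = col_perm sg (Qm k y).
  by apply/matrixP => a b; rewrite !mxE.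
by rewrite col_permE det_mulmx det_perm odd_permV mulrC.
Qed.

Lemma cD_antisym k : antisym_fun (polyev (cD k)).
Proof. by move=> sg x; rewrite -!Dk_polyev Dk_perm. Qed.

Definition beta (j m : 'I_n) := phi (horner 'X^j) m.

Lemma mono_expand (j : 'I_n) y : y ^+ j = \sum_m beta j m * qv m y.
Proof. by rewrite -(hornerXn y) (@expand_poly _ y) // size_polyXn ltn_ord. Qed.

Definition gam (c : {ffun 'I_l -> 'I_n} -> C) (k : {ffun 'I_l -> 'I_n}) :=
  \sum_e c e * \prod_a beta (e a) (k a).

Lemma polyev_expand c y : polyev c y = \sum_k gam c k * \prod_a qv (k a) (y a).
Proof.
rewrite /polyev /gam.
under [RHS]eq_bigr do rewrite mulr_suml.
rewrite [RHS]exchange_big /=; apply: eq_bigr => e _.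
transitivity (c e * \prod_a \sum_m beta (e a) m * qv m (y a)).
  by congr (_ * _); apply: eq_bigr => a _; rewrite mono_expand.
rewrite bigA_distr_bigA mulr_sumr; apply: eq_bigr => k _.
by rewrite big_split mulrA.
Qed.

Lemma antisym_expand c : antisym_fun (polyev c) ->
  forall y, (l`!)%:R * polyev c y = \sum_k gam c k * Dk k y.
Proof.
move=> H y.
transitivity (\sum_(sg : 'S_l) (-1) ^+ sg * polyev c (fun a => y (sg a))).
  have -> : (l`!)%:R = \sum_(sg : 'S_l) (1 : C) by rewrite sumr_const card_Sn.
  rewrite mulr_suml; apply: eq_bigr => sg _.
  by rewrite H mulrA -signr_addb addbb expr0 !mul1r.
under eq_bigr do rewrite polyev_expand mulr_sumr.
rewrite exchange_big /=; apply: eq_bigr => k _.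
rewrite /Dk /determinant mulr_sumr; apply: eq_bigr => sg _.
by rewrite mulrCA; congr (_ * (_ * _)); apply: eq_bigr => a _; rewrite mxE.
Qed.

Definition imk (k : {ffun 'I_l -> 'I_n}) : {set 'I_n} := k @: 'I_l.
Definition Pk (k : {ffun 'I_l -> 'I_n}) : 'M[C]_l :=
  \matrix_(a, b) ((k a == mo (imk k) b)%:R).

Lemma Dk_inj (k : {ffun 'I_l -> 'I_n}) y : #|imk k| = l ->
  Dk k y = \det (Pk k) * Dk (mo (imk k)) y.
Proof.
move=> HK; rewrite /Dk -det_mulmx; congr (\det _).
apply/matrixP => a c; rewrite !mxE.
have ka : k a \in imk k by rewrite /imk imset_f.
have [b hb] := mo_surj HK ka.
rewrite (bigD1 b) //= !mxE hb eqxx mul1r big1 ?addr0 //.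
move=> b' bb'; rewrite !mxE -hb (inj_eq (mo_inj HK)) eq_sym (negbTE bb').
by rewrite mul0r.
Qed.

Lemma Dk_ninj (k : {ffun 'I_l -> 'I_n}) y : #|imk k| != l -> Dk k y = 0.
Proof.
move=> HK; have : ~~ injectiveb k.
  apply: contra HK => /injectiveP ik.
  by rewrite /imk card_imset // card_ord.
case/injectivePn => a1 [a2 a12 e].
by rewrite /Dk (determinant_alternate a12) // => b; rewrite !mxE e.
Qed.

Lemma span_alg (c : {ffun 'I_l -> 'I_n} -> C) : antisym_fun (polyev c) ->
  exists lam : {set 'I_n} -> C, forall y,
    polyev c y = \sum_(M : {set 'I_n} | #|M| == l) lam M * Dk (mo M) y.
Proof.
move=> H.
exists (fun M => (l`!%:R)^-1 * \sum_(k | imk k == M) gam c k * \det (Pk k)) => y.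
have f0 : (l`!%:R : C) != 0 by rewrite pnatr_eq0 -lt0n fact_gt0.
rewrite -[LHS](mulKf f0) antisym_expand //.
under [RHS]eq_bigr do rewrite -mulrA.
rewrite -mulr_sumr; congr (_ * _).
rewrite (bigID (fun k => #|imk k| == l)) /= [X in _ + X]big1 ?addr0; last first.
  by move=> k /Dk_ninj ->; rewrite mulr0.
rewrite (partition_big imk (fun M => #|M| == l)) //=.
apply: eq_bigr => M HM; rewrite mulr_suml.
apply: eq_big => [k|k /andP [Hk /eqP e]].
  by case: (imk k =P M) => [->|]; rewrite ?HM ?andbF.
by rewrite Dk_inj ?(eqP Hk) // e mulrA.
Qed.
End Vmat.
End Poly.

Local Open Scope complex_scope.

Section Link.
Variable R : realType.
Local Notation C := R[i].

Lemma zat_val n (z : 'I_n -> C) (j : 'I_n) : zat z (val j) = z j.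
Proof. by rewrite /zat valK. Qed.

Lemma melt_mo n l (Hln : (l <= n)%N) (M : {set 'I_n}) (HM : #|M| = l) (a : 'I_l) :
  melt M a = val (mo Hln M a).
Proof.
have so : sorted leq [seq val i | i <- enum M].
  rewrite sorted_map /enum_mem -enumT; apply: sorted_filter.
    by move=> x y t; apply: leq_trans.
  by rewrite -sorted_map val_enum_ord iota_sorted.
rewrite /melt (sorted_sort leq_trans so) (nth_map (mo Hln M a)).
  by rewrite -(mo_nth Hln HM).
by rewrite -cardE HM ltn_ord.
Qed.

Lemma core_id (p : C) n (z : 'I_n -> C) (m : 'I_n) (x : C) :
  (forall j, Efun p (x - z j) != 1) ->
  ((Efun p (x - z m) - 1)^-1 *
     \prod_(j < n | (val j < val m)%N)
        ((Efun p (x - z j) + 1) / (Efun p (x - z j) - 1)))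
  * \prod_(j < n) (1 - Efun p (x - z j))
  = qv (fun j => Efun p (- z j)) m (Efun p x).
Proof.
move=> reg.
have uE j : Efun p (x - z j) = Efun p (- z j) * Efun p x by rewrite Efun_add mulrC.
have u1 j : Efun p (x - z j) - 1 != 0 by rewrite subr_eq0 reg.
rewrite /qv /qp hornerN horner_prod.
rewrite big_mkcond (bigD1 m) //= ltnn mul1r [X in _ * X](bigD1 m) //=.
rewrite mulrACA -big_split /=.
have -> : (Efun p (x - z m) - 1)^-1 * (1 - Efun p (x - z m)) = -1.
  by rewrite -[1 - _]opprB mulrN mulVf.
rewrite mulN1r; congr (- _); apply: eq_bigr => j jm.
rewrite /qf; case: ifP => _.
  rewrite hornerN hornerD hornerZ hornerX hornerC -uE.
  by field; rewrite u1.
by rewrite mul1r hornerD hornerN hornerZ hornerX hornerC -uE.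
Qed.

Lemma WM_link (p : C) n l (Hln : (l <= n)%N) (z : 'I_n -> C) (M : {set 'I_n})
  (HM : #|M| = l) (t : 'I_l -> C) :
  regular_pt p z t ->
  WM p z M t * \prod_(m < n) \prod_(a < l) (1 - Efun p (t a - z m)) =
  Dk (fun j => Efun p (- z j)) (mo Hln M) (fun b => Efun p (t b)).
Proof.
move=> reg.
rewrite /WM /Asym /Dk /determinant mulr_suml; apply: eq_bigr => sg _.
rewrite -mulrA; congr (_ * _).
rewrite exchange_big /= (reindex_inj (@perm_inj _ sg)) /= /GM -big_split /=.
apply: eq_bigr => a _; rewrite mxE (melt_mo Hln HM) zat_val.
by apply: core_id => j; apply: reg.
Qed.

Lemma Efun_real (p : C) (r : R) : p != 0 ->
  Efun p ((r / (2 * pi))%:C * p * - 'i%R) = (expR r)%:C.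
Proof.
move=> p0.
rewrite /Efun; have pi0 : (pi : R) != 0 by rewrite gt_eqF // pi_gt0.
have -> : (2 * pi)%:C * 'i%R * ((r / (2 * pi))%:C * p * - 'i%R) / p = r%:C.
  have e : (2 * pi)%:C * (r / (2 * pi))%:C = r%:C :> C.
    by rewrite -rmorphM /= mulrC divfK // mulf_neq0 // pnatr_eq0.
  have i2 : ('i%R : C) * 'i%R = -1 by rewrite -expr2 sqrCi.
  transitivity ((2 * pi)%:C * (r / (2 * pi))%:C * (- ('i%R * 'i%R)) * (p / p) : C).
    by ring.
  by rewrite e i2 opprK mulr1 divff // mulr1.
rewrite /expC /= cos0 sin0.
by apply/eqP; rewrite eq_complex /= !mulr0 !mulr1 subr0 addr0 !eqxx.
Qed.

Lemma points (p : C) n (z : 'I_n -> C) : p != 0 ->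
  exists tau : 'I_n -> C, injective (fun i => Efun p (tau i)) /\
    forall i j, Efun p (tau i - z j) != 1.
Proof.
move=> p0.
pose B : R := \sum_j `|complex.Re ((Efun p (- z j))^-1)|.
pose r (i : 'I_n) : R := B + i%:R.
exists (fun i => ((r i / (2 * pi))%:C * p * - 'i%R)); split.
  move=> i j /=; rewrite !Efun_real // => /complexI /expR_inj /addrI /eqP.
  by rewrite eqr_nat => /eqP /val_inj.
move=> i j; rewrite Efun_add Efun_real //; apply/negP => /eqP H.
have Hw : Efun p (- z j) != 0 by apply: Efun_neq0.
have e : (expR (r i))%:C = (Efun p (- z j))^-1.
  by apply: (mulIf Hw); rewrite H mulVf.
have : expR (r i) <= B.
  have -> : expR (r i) = complex.Re ((Efun p (- z j))^-1) by rewrite -e.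
  apply: le_trans (real_ler_norm _) _; first exact: num_real.
  rewrite /B (bigD1 j) //= lerDl; apply: sumr_ge0 => k _; exact: normr_ge0.
have h1 := expR_ge1Dx (r i).
have h2 : B <= r i by rewrite /r lerDl ler0n.
lra.
Qed.
End Link.

Unset Implicit Arguments.

Theorem proposition5p1 (R : realType) (hbar : R[i]) (n l : nat) (z : 'I_n -> R[i]) :
  hbar != 0 -> (l <= n)%N -> generic_pt hbar (2 * hbar) z ->
  (* each W_M lies in the space *)
  (forall M : {set 'I_n}, #|M| = l -> Fspace (2 * hbar) z (@WM R n l (2 * hbar) z M)) /\
  (* linear independence (as functions off the poles) *)
  (forall lam : {set 'I_n} -> R[i],
     (forall t : 'I_l -> R[i], regular_pt (2 * hbar) z t ->
        \sum_(M : {set 'I_n} | #|M| == l) lam M * WM (2 * hbar) z M t = 0) ->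
     forall M : {set 'I_n}, #|M| = l -> lam M = 0) /\
  (* spanning *)
  (forall F : ('I_l -> R[i]) -> R[i], Fspace (2 * hbar) z F ->
     exists lam : {set 'I_n} -> R[i],
       forall t : 'I_l -> R[i], regular_pt (2 * hbar) z t ->
         F t = \sum_(M : {set 'I_n} | #|M| == l) lam M * WM (2 * hbar) z M t).
Proof.
move=> h0 Hln gen.
have p0 : 2 * hbar != 0 by rewrite mulf_neq0 // pnatr_eq0.
pose w j := Efun (2 * hbar) (- z j).
have w0 j : w j != 0 by apply: Efun_neq0.
have wjk : forall j k, j != k -> w j + w k != 0 by apply: w_sum_neq0.
have [tau [sinj treg]] := points z p0.
pose Prod (t : 'I_l -> R[i]) :=
  \prod_(m < n) \prod_(a < l) (1 - Efun (2 * hbar) (t a - z m)).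
have Prod0 t : regular_pt (2 * hbar) z t -> Prod t != 0.
  move=> reg; rewrite prodf_seq_neq0; apply/allP => m _ /=.
  rewrite prodf_seq_neq0; apply/allP => a _ /=.
  by rewrite subr_eq0 eq_sym reg.
split; [|split].
- move=> M HM; exists (cD w (mo Hln M)); split; first exact: cD_antisym.
  by move=> t reg; rewrite (WM_link Hln HM reg) Dk_polyev.
- move=> lam H M HM.
  apply: (indep_alg w0 wjk sinj (Hln := Hln)) => // i.
  have reg : regular_pt (2 * hbar) z (fun c => tau (i c)) by move=> a m; apply: treg.
  transitivity ((\sum_(M : {set 'I_n} | #|M| == l) lam M * WM (2 * hbar) z M (fun c => tau (i c)))
     * Prod (fun c => tau (i c))); last by rewrite H // mul0r.
  rewrite mulr_suml; apply: eq_bigr => M' /eqP HM'.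
  by rewrite -mulrA (WM_link Hln HM' reg).
- move=> F [c [ca Hc]].
  have [lam Hl] := span_alg w0 wjk sinj Hln ca.
  exists lam => t reg; apply: (mulIf (Prod0 t reg)).
  rewrite /Prod (Hc t reg) Hl mulr_suml; apply: eq_bigr => M /eqP HM.
  by rewrite -mulrA (WM_link Hln HM reg).
Qed.
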